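(* Let $\alpha_1,\ldots,\alpha_n$ and $\beta_1,\ldots,\beta_n$ be real numbers with $1\ge\alpha_1\ge\cdots\ge\alpha_n\ge 0$ and $1\ge\beta_1\ge\cdots\ge\beta_n\ge 0$. Define probability distributions on $\{0,1\}^n$ by \[ P(x)=\frac{1}{2^n}\prod_{j=1}^n\big(1+(-1)^{x_j}\alpha_j\big),\qquad Q(y)=\frac{1}{2^n}\prod_{j=1}^n\big(1+(-1)^{y_j}\beta_j\big). \] If $\prod_{j=1}^k\alpha_j\le\prod_{j=1}^k\beta_j$ for all $k=1,\ldots,n$, with equality for $k=n$, then $P\prec Q$.
   Context: For probability vectors $P,Q$ with $N$ entries, $P\prec Q$ (majorization) means: sorting entries in non-increasing order $p^\downarrow_1\ge\cdots\ge p^\downarrow_N$, $q^\downarrow_1\ge\cdots\ge q^\downarrow_N$, one has $\sum_{i=1}^k p^\downarrow_i\le\sum_{i=1}^k q^\downarrow_i$ for all $k=1,\ldots,N$, with equality for $k=N$. *)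

(* Defs.v *)
From HB Require Import structures.
From mathcomp Require Import all_boot all_order all_algebra.
Set Implicit Arguments. Unset Strict Implicit. Unset Printing Implicit Defensive.
Import Order.TTheory GRing.Theory Num.Theory.
Local Open Scope ring_scope.

Definition sorted_desc (R : realFieldType) (T : finType) (P : T -> R) : seq R :=
  sort (fun x y : R => y <= x) [seq P x | x <- enum T].

Definition majorized (R : realFieldType) (T : finType) (P Q : T -> R) : Prop :=
  (forall k : nat, (0 < k <= #|T|)%N ->
     \sum_(i < k) nth 0 (sorted_desc P) i <= \sum_(i < k) nth 0 (sorted_desc Q) i)
  /\ \sum_(i < #|T|) nth 0 (sorted_desc P) i = \sum_(i < #|T|) nth 0 (sorted_desc Q) i.

Definition prod_dist (R : realFieldType) (n : nat) (a : 'I_n -> R)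
  (x : {ffun 'I_n -> bool}) : R :=
  (2 ^+ n)^-1 * \prod_(j < n) (1 + (-1) ^+ (x j : nat) * a j).

(* Main.v *)
Require Import Defs.
From HB Require Import structures.
From mathcomp Require Import all_boot all_order all_algebra.
From mathcomp Require Import ring lra.
Import Order.TTheory GRing.Theory Num.Theory.
Local Open Scope ring_scope.
Set Implicit Arguments. Unset Strict Implicit.

Fixpoint GG (R : realFieldType) (s : seq R) (f : R -> R) (c : R) : R :=
  match s with
  | [::] => f c
  | a :: s' => GG s' f (c * (1 + a)) + GG s' f (c * (1 - a))
  end.
Arguments GG {R}.

Definition hinge (R : realFieldType) (t u : R) : R := Num.max (u - t) 0.

Lemma hinge_cases (R : realFieldType) (t u : R) :
  (u <= t /\ hinge t u = 0) \/ (t <= u /\ hinge t u = u - t).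
Proof.
rewrite /hinge; case: (lerP t u) => H.
  right; split => //; apply/max_idPl; by rewrite subr_ge0.
left; split; first exact: ltW.
apply/max_idPr; rewrite subr_le0; exact: ltW.
Qed.

Lemma hinge_ge0 (R : realFieldType) (t u : R) : 0 <= hinge t u.
Proof. by case: (hinge_cases t u) => -[? ->]; lra. Qed.

Lemma hinge_ge (R : realFieldType) (t u : R) : u <= t + hinge t u.
Proof. by case: (hinge_cases t u) => -[? ->]; lra. Qed.

Lemma H2 (R : realFieldType) (t m e e' : R) : e <= e' -> - e <= e' ->
  hinge t (m + e) + hinge t (m - e) <= hinge t (m + e') + hinge t (m - e').
Proof.
move=> h1 h2.
case: (hinge_cases t (m + e)) => -[? ->];
case: (hinge_cases t (m - e)) => -[? ->];
case: (hinge_cases t (m + e')) => -[? ->];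
case: (hinge_cases t (m - e')) => -[? ->]; lra.
Qed.

Definition lemq (R : realFieldType) (S S' : seq R) :=
  forall t c, 0 <= c -> GG S (hinge t) c <= GG S' (hinge t) c.

Definition all01 (R : realFieldType) (s : seq R) := all (fun x => 0 <= x <= 1) s.

Lemma GG_mono (R : realFieldType) (T : seq R) (f g : R -> R) :
  all01 T -> (forall u, 0 <= u -> f u <= g u) ->
  forall c, 0 <= c -> GG T f c <= GG T g c.
Proof.
elim: T => [|a T IH] /= hT hfg c hc; first exact: hfg.
move/andP: hT => [/andP [ha0 ha1] hT].
apply: lerD; apply: IH => //; apply: mulr_ge0 => //; lra.
Qed.

Lemma GG_add (R : realFieldType) (T : seq R) (f g : R -> R) c :
  GG T (fun u => f u + g u) c = GG T f c + GG T g c.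
Proof.
elim: T c => [|a T IH] c //=; rewrite !IH; ring.
Qed.

Lemma GG_scale (R : realFieldType) (T : seq R) (f : R -> R) l c :
  GG T (fun u => f (u * l)) c = GG T f (c * l).
Proof.
elim: T c => [|a T IH] c //=; rewrite !IH.
by congr (GG _ _ _ + GG _ _ _); ring.
Qed.

Lemma GG_ext (R : realFieldType) (T : seq R) (f g : R -> R) c :
  (forall u, f u = g u) -> GG T f c = GG T g c.
Proof. by move=> fg; elim: T c => [|a T IH] c //=; rewrite !IH. Qed.

Lemma GG_cat (R : realFieldType) (s1 s2 : seq R) f c :
  GG (s1 ++ s2) f c = GG s1 (GG s2 f) c.
Proof. by elim: s1 c => [|a s1 IH] c //=; rewrite !IH. Qed.

Lemma GG_rot1 (R : realFieldType) (s : seq R) a f c :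
  GG s (GG [:: a] f) c = GG (a :: s) f c.
Proof.
have -> : GG [:: a] f = fun u => f (u * (1 + a)) + f (u * (1 - a)) by [].
by rewrite GG_add !GG_scale.
Qed.

Lemma GG_perm (R : realFieldType) (s s' : seq R) f c :
  perm_eq s s' -> GG s f c = GG s' f c.
Proof.
elim: s s' f c => [|a s IH] s' f c.
  by move=> hp; have -> : s' = [::] by apply/perm_nilP; rewrite perm_sym.
move=> hp.
have ha : a \in s' by rewrite -(perm_mem hp) mem_head.
case/splitPr: ha hp => s1 s2 hp.
move: hp; rewrite perm_sym -[a :: s2]cat1s perm_catCA /= perm_cons perm_sym => hp.
rewrite GG_cat (@GG_ext _ s1 (GG (a :: s2) f) (GG s2 (GG [:: a] f))); last first.
  by move=> u; rewrite GG_rot1.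
by rewrite -GG_cat GG_rot1 /= !(IH (s1 ++ s2)).
Qed.

Lemma lemq_refl (R : realFieldType) (S : seq R) : lemq S S.
Proof. by move=> t c _. Qed.

Lemma lemq_trans (R : realFieldType) (S1 S2 S3 : seq R) :
  lemq S1 S2 -> lemq S2 S3 -> lemq S1 S3.
Proof. move=> h1 h2 t c hc; exact: le_trans (h1 t c hc) (h2 t c hc). Qed.

Lemma lemq_perm (R : realFieldType) (S S' S1 S1' : seq R) :
  perm_eq S S1 -> perm_eq S' S1' -> lemq S S' -> lemq S1 S1'.
Proof.
by move=> p1 p2 h t c hc; rewrite -(GG_perm _ _ p1) -(GG_perm _ _ p2); apply: h.
Qed.

Lemma lemq_catl (R : realFieldType) (T S S' : seq R) :
  all01 T -> lemq S S' -> lemq (T ++ S) (T ++ S').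
Proof.
move=> hT h t c hc; rewrite !GG_cat; apply: GG_mono => // u hu; exact: h.
Qed.

Lemma lemq_catr (R : realFieldType) (T S S' : seq R) :
  all01 T -> lemq S S' -> lemq (S ++ T) (S' ++ T).
Proof.
move=> hT h; apply: (@lemq_perm _ (T ++ S) (T ++ S')).
- by rewrite perm_catC perm_refl.
- by rewrite perm_catC perm_refl.
- exact: lemq_catl.
Qed.

Lemma lemq_cons2 (R : realFieldType) (x y : R) (S S' : seq R) :
  0 <= x <= 1 -> all01 S' -> lemq [:: x] [:: y] -> lemq S S' ->
  lemq (x :: S) (y :: S').
Proof.
move=> hx hS' h1 h2; apply: (@lemq_trans _ _ (x :: S')).
  by apply: (lemq_catl (T := [:: x])) => //=; rewrite hx.
exact: (lemq_catr hS' h1).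
Qed.

Lemma lemq_L1 (R : realFieldType) (a b : R) :
  0 <= a -> a <= b -> b <= 1 -> lemq [:: a] [:: b].
Proof.
move=> ha hab hb t c hc /=.
have e1 : c * (1 + a) = c + c * a by ring.
have e2 : c * (1 - a) = c - c * a by ring.
have e3 : c * (1 + b) = c + c * b by ring.
have e4 : c * (1 - b) = c - c * b by ring.
rewrite e1 e2 e3 e4; apply: H2; nra.
Qed.

Lemma lemq_PW (R : realFieldType) (a : R) (al be : seq R) :
  size al = size be -> all (fun x => 0 <= x <= a) al ->
  all (fun y => a <= y <= 1) be -> lemq al be.
Proof.
elim: al be => [|x al IH] [|y be] //= hs; first by move=> _ _; exact: lemq_refl.
move=> /andP [/andP [hx0 hxa] hal] /andP [/andP [hay hy1] hbe].
apply: lemq_cons2.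
- apply/andP; split => //; exact: le_trans hxa (le_trans hay hy1).
- apply/allP => z hz; move/allP: hbe => /(_ z hz) /andP [h1 h2].
  apply/andP; split => //; apply: le_trans h1; apply: le_trans hx0 hxa.
- apply: lemq_L1 => //; exact: le_trans hxa hay.
- by apply: IH => //; case: hs.
Qed.

Lemma lemq_L2 (R : realFieldType) (x1 x2 y1 y2 : R) :
  0 <= x1 -> 0 <= x2 -> 0 <= y2 -> 0 < y1 -> y2 <= y1 -> x1 <= y1 -> x2 <= y1 ->
  x1 * x2 = y1 * y2 -> lemq [:: x1; x2] [:: y1; y2].
Proof.
move=> hx1 hx2 hy2 hy1 hyy h1 h2 hp t c hc /=.
have k2 : y2 <= x2.
  rewrite -(ler_pM2l hy1); rewrite -hp; apply: ler_wpM2r => //.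
have k1 : y2 <= x1.
  rewrite -(ler_pM2l hy1); rewrite -hp mulrC; apply: ler_wpM2r => //.
have ks : x1 + x2 <= y1 + y2.
  rewrite -(ler_pM2l hy1) -subr_ge0.
  have -> : y1 * (y1 + y2) - y1 * (x1 + x2) = (y1 - x1) * (y1 - x2) by rewrite mulrDr -hp; ring.
  apply: mulr_ge0; lra.
have A : hinge t (c * (1 + x1 * x2) + c * (x1 + x2)) + hinge t (c * (1 + x1 * x2) - c * (x1 + x2))
  <= hinge t (c * (1 + x1 * x2) + c * (y1 + y2)) + hinge t (c * (1 + x1 * x2) - c * (y1 + y2)).
  apply: H2; nra.
have B : hinge t (c * (1 - x1 * x2) + c * (x1 - x2)) + hinge t (c * (1 - x1 * x2) - c * (x1 - x2))
  <= hinge t (c * (1 - x1 * x2) + c * (y1 - y2)) + hinge t (c * (1 - x1 * x2) - c * (y1 - y2)).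
  apply: H2; nra.
have e1 : c * (1 + x1) * (1 + x2) = c * (1 + x1 * x2) + c * (x1 + x2) by ring.
have e2 : c * (1 + x1) * (1 - x2) = c * (1 - x1 * x2) + c * (x1 - x2) by ring.
have e3 : c * (1 - x1) * (1 + x2) = c * (1 - x1 * x2) - c * (x1 - x2) by ring.
have e4 : c * (1 - x1) * (1 - x2) = c * (1 + x1 * x2) - c * (x1 + x2) by ring.
have f1 : c * (1 + y1) * (1 + y2) = c * (1 + x1 * x2) + c * (y1 + y2) by rewrite hp; ring.
have f2 : c * (1 + y1) * (1 - y2) = c * (1 - x1 * x2) + c * (y1 - y2) by rewrite hp; ring.
have f3 : c * (1 - y1) * (1 + y2) = c * (1 - x1 * x2) - c * (y1 - y2) by rewrite hp; ring.
have f4 : c * (1 - y1) * (1 - y2) = c * (1 + x1 * x2) - c * (y1 + y2) by rewrite hp; ring.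
rewrite e1 e2 e3 e4 f1 f2 f3 f4.
lra.
Qed.

Lemma prod_le_pow (R : realFieldType) (a : R) (s : seq R) :
  all (fun x => 0 <= x <= a) s -> \prod_(x <- s) x <= a ^+ size s.
Proof.
elim: s => [|x s IH] /=; first by rewrite big_nil expr0.
move=> /andP [/andP [h0 h1] hs]; rewrite big_cons exprS.
apply: ler_pM => //; last exact: IH.
by rewrite big_seq; apply: prodr_ge0 => i /(allP hs) /andP [].
Qed.

Lemma pow_le_prod (R : realFieldType) (a : R) (s : seq R) :
  0 <= a -> all (fun x => a <= x) s -> a ^+ size s <= \prod_(x <- s) x.
Proof.
move=> ha; elim: s => [|x s IH] /=; first by rewrite big_nil expr0.
move=> /andP [h1 hs]; rewrite big_cons exprS.
apply: ler_pM => //; [exact: exprn_ge0 | exact: IH].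
Qed.

Lemma dec_seq (R : realFieldType) (a x : R) (s : seq R) : a <= x ->
  has (fun y => y < a) s ->
  exists s1 b b' s2, x :: s = s1 ++ b :: b' :: s2 /\ all (fun y => a <= y) s1
    /\ a <= b /\ b' < a.
Proof.
elim: s x => [|y s IH] x //= hx.
case: (ltP y a) => hy /=.
  by move=> _; exists [::], x, y, s.
move=> hs; case: (IH y hy hs) => s1 [b [b' [s2 [E [H1 [H2 H3]]]]]].
by exists (x :: s1), b, b', s2; rewrite E /= hx H1.
Qed.

Lemma perm_mid (T : eqType) (s1 s2 : seq T) x :
  perm_eq (s1 ++ x :: s2) (x :: s1 ++ s2).
Proof. by rewrite -[x :: s2]cat1s perm_catCA. Qed.

Lemma core (R : realFieldType) (al be : seq R) :
  size al = size be -> sorted (fun x y => y <= x) al -> all01 al -> all01 be ->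
  (forall k, \prod_(x <- take k al) x <= \prod_(x <- take k be) x) -> lemq al be.
Proof.
elim: al be => [|a al IH] be.
  by case: be => // _ _ _ _ _; apply: lemq_refl.
case: be => [|b0 be0] // hs hsort hal hbe hpre.
have hal' : all (fun x => x <= a) al.
  apply: (order_path_min (leT := fun x y => y <= x)) => //.
  by move=> x y z hyx hzy; apply: le_trans hzy hyx.
have hb0 : a <= b0.
  by have := hpre 1%N; rewrite /= !take0 !big_seq1.
move: hal => /= /andP [/andP [ha0 ha1] hal].
case: (boolP (has (fun y => y < a) (b0 :: be0))) => hh.
  have hh' : has (fun y => y < a) be0 by move: hh => /=; rewrite ltNge hb0.
  case: (dec_seq hb0 hh') => s1 [b [b' [s2 [E [H1 [H2 H3]]]]]].
  rewrite E in hs hbe hpre *.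
  move: hbe; rewrite /all01 all_cat /= => /andP [hs1 /andP [hb01 /andP [hb'01 hs2]]].
  move/andP: hb01 => [hb0' hb1]; move/andP: hb'01 => [hb'0 hb'1].
  have hapos : 0 < a := le_lt_trans hb'0 H3.
  set v := b * b' / a.
  have hav : a * v = b * b' by rewrite /v mulrC divfK // gt_eqF.
  have hv0 : 0 <= v by rewrite /v; apply: divr_ge0; [exact: mulr_ge0 | exact: ltW].
  have hvb : v <= b.
    rewrite -(ler_pM2l hapos) hav [a * b]mulrC; apply: ler_wpM2l => //; exact: ltW.
  have hIH : lemq al (s1 ++ v :: s2).
    apply: IH.
    - move: hs; rewrite /= !size_cat /= addnS => -[->] //.
    - exact: path_sorted hsort.
    - exact: hal.
    - by rewrite /all01 all_cat /= hs1 hs2 hv0 (le_trans hvb hb1).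
    move=> k.
    have hsz : size al = (size s1 + (size s2).+1)%N.
      by move: hs; rewrite /= !size_cat /= addnS => -[->].
    case: (leqP k (size s1)) => hk.
      rewrite takel_cat //.
      apply: le_trans (prod_le_pow (a := a) _) _.
        apply/allP => x /mem_take hx; rewrite (allP hal' x hx) andbT.
        by case/andP: (allP hal x hx).
      rewrite size_takel; last by rewrite hsz; apply: (leq_trans hk); exact: leq_addr.
      have := pow_le_prod ha0 (s := take k s1) _; rewrite size_takel //; apply.
      by apply/allP => x /mem_take hx; exact: (allP H1 x hx).
    have [r hr] : exists r, k = (size s1 + r.+1)%N.
      by exists (k - size s1).-1; rewrite prednK ?subn_gt0 // subnKC // ltnW.
    have := hpre k.+1; rewrite hr -addnS /= !take_cat !ltnNge !leq_addr /= !addKn /=.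
    rewrite !big_cat !big_cons /= => hk1.
    move: hk1; rewrite addnS /= big_cons => hk1.
    rewrite -(ler_pM2l hapos); apply: (le_trans hk1); rewrite le_eqVlt; apply/orP; left; apply/eqP.
    rewrite [b * (b' * _)]mulrA -hav; ring.
  apply: (@lemq_trans _ _ (a :: s1 ++ v :: s2)).
    apply: lemq_cons2; [by rewrite ha0 ha1 | | exact: lemq_refl | exact: hIH].
    by rewrite /all01 all_cat /= hs1 hs2 hv0 (le_trans hvb hb1).
  apply: (@lemq_perm _ ([:: a; v] ++ (s1 ++ s2)) ([:: b; b'] ++ (s1 ++ s2))).
  - by rewrite /= perm_cons perm_sym perm_mid.
  - by rewrite perm_sym -[b :: b' :: s2]/([:: b; b'] ++ s2) perm_catCA.
  apply: lemq_catr; first by rewrite /all01 all_cat hs1 hs2.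
  apply: lemq_L2 => //; [exact: lt_le_trans H2 | exact: le_trans (ltW H3) H2].
have hall : all (fun y => a <= y) (b0 :: be0).
  apply/allP => y hy; rewrite leNgt; apply/negP => hya.
  by move/negP: hh; apply; apply/hasP; exists y.
apply: (lemq_PW (a := a)) => //.
  rewrite /= ha0 lexx /=; apply/allP => x hx.
  by move/allP: hal => /(_ x hx) /andP [-> _]; rewrite (allP hal').
apply/allP => y hy; rewrite (allP hall) //=.
by move/allP: hbe => /(_ y hy) /andP [].
Qed.

Definition consf n (p : bool * {ffun 'I_n -> bool}) : {ffun 'I_n.+1 -> bool} :=
  [ffun i => if unlift ord0 i is Some j then p.2 j else p.1].

Definition unconsf n (x : {ffun 'I_n.+1 -> bool}) : bool * {ffun 'I_n -> bool} :=
  (x ord0, [ffun j => x (lift ord0 j)]).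

Lemma consf_bij n : bijective (@consf n).
Proof.
exists (@unconsf n).
  case=> b y; rewrite /unconsf /consf /=; congr pair; first by rewrite ffunE unlift_none.
  by apply/ffunP => j; rewrite !ffunE liftK.
move=> x; apply/ffunP => i; rewrite /unconsf /consf ffunE /=.
by case: unliftP => [j ->|->] //; rewrite ffunE.
Qed.

Lemma GG_link (R : realFieldType) n (a : 'I_n -> R) (F : R -> R) c :
  \sum_(x : {ffun 'I_n -> bool}) F (c * \prod_(j < n) (1 + (-1) ^+ (x j : nat) * a j))
  = GG [seq a i | i <- enum 'I_n] F c.
Proof.
elim: n a c => [|n IH] a c.
  rewrite (bigD1 [ffun => false]) //= big_ord0 mulr1 enum_ord0 /=.
  rewrite [X in _ + X]big1 ?addr0 // => x hx.
  by exfalso; move/negP: hx; apply; apply/eqP/ffunP => -[].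
rewrite (reindex (@consf n)); last by apply: onW_bij; exact: consf_bij.
rewrite -(pair_big xpredT xpredT (fun b y => F (c * \prod_(j < n.+1) (1 + (-1) ^+ (consf (b, y) j : nat) * a j)))) /=.
rewrite big_bool /= enum_ordSl /= -map_comp.
have E : forall b (y : {ffun 'I_n -> bool}),
   c * \prod_(j < n.+1) (1 + (-1) ^+ (consf (b, y) j : nat) * a j)
   = (c * (1 + (-1) ^+ (b : nat) * a ord0)) * \prod_(j < n) (1 + (-1) ^+ (y j : nat) * (a \o lift ord0) j).
  move=> b y; rewrite big_ord_recl -mulrA; congr (_ * (_ * _)).
    by rewrite /consf ffunE unlift_none.
  by apply: eq_bigr => j _; rewrite /consf ffunE liftK.
under eq_bigr do rewrite E.
under [X in _ + X]eq_bigr do rewrite E.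
rewrite !IH /= expr1 expr0 mul1r mulN1r addrC.
done.
Qed.

Lemma size_sd (R : realFieldType) (T : finType) (P : T -> R) :
  size (sorted_desc P) = #|T|.
Proof. by rewrite /sorted_desc size_sort size_map cardT. Qed.

Lemma sum_sd (R : realFieldType) (T : finType) (P : T -> R) (f : R -> R) :
  \sum_(i < #|T|) f (nth 0 (sorted_desc P) i) = \sum_x f (P x).
Proof.
rewrite -(big_mkord xpredT (fun i => f (nth 0 (sorted_desc P) i))).
rewrite -(size_sd P) -(big_nth 0 xpredT f).
rewrite /sorted_desc (perm_big _ (permEl (perm_sort _ _))) big_map big_enum.
by apply: eq_bigl => x; rewrite inE.
Qed.

Lemma sorted_sd (R : realFieldType) (T : finType) (P : T -> R) :
  sorted (fun x y : R => y <= x) (sorted_desc P).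
Proof. apply: sort_sorted => x y; exact: le_total. Qed.

Lemma sd_mono (R : realFieldType) (T : finType) (P : T -> R) (i j : nat) :
  (i <= j)%N -> (j < #|T|)%N -> nth 0 (sorted_desc P) j <= nth 0 (sorted_desc P) i.
Proof.
move=> hij hj.
have tr : transitive (fun x y : R => y <= x).
  by move=> x y z hyx hzy; apply: le_trans hzy hyx.
have H := @sorted_leq_nth _ (fun x y : R => y <= x) tr (fun x => lexx x) 0 _ (sorted_sd P).
apply: H => //; rewrite inE size_sd //; exact: leq_ltn_trans hij hj.
Qed.

Lemma major_of_hinge (R : realFieldType) (T : finType) (P Q : T -> R) :
  (forall t, \sum_x hinge t (P x) <= \sum_x hinge t (Q x)) ->
  \sum_x P x = \sum_x Q x -> majorized P Q.
Proof.
move=> hh hs; split; last by rewrite (sum_sd P id) (sum_sd Q id).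
move=> k /andP [hk0 hkN].
set t := nth 0 (sorted_desc Q) k.-1.
have eQ : \sum_(i < k) nth 0 (sorted_desc Q) i = k%:R * t + \sum_x hinge t (Q x).
  rewrite -(sum_sd Q (hinge t)).
  rewrite (bigID (fun i : 'I_#|T| => (i < k)%N)) /=.
  rewrite [X in _ + (_ + X)]big1 ?addr0; last first.
    move=> i; rewrite -leqNgt => hki.
    case: (hinge_cases t (nth 0 (sorted_desc Q) i)) => -[h1 h2] //.
    have : nth 0 (sorted_desc Q) i <= t.
      by apply: sd_mono; [exact: leq_trans (leq_pred k) hki | exact: ltn_ord].
    by move=> h3; rewrite h2; apply/eqP; rewrite subr_eq0 eq_le h1 h3.
  rewrite -(big_ord_widen _ (fun i => hinge t (nth 0 (sorted_desc Q) i)) hkN).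
  rewrite mulr_natl -[in t *+ k](card_ord k) -sumr_const -big_split /=.
  apply: eq_bigr => i _.
  case: (hinge_cases t (nth 0 (sorted_desc Q) i)) => -[h1 h2]; rewrite h2; last by ring.
  have : t <= nth 0 (sorted_desc Q) i.
    apply: sd_mono; first by rewrite -ltnS prednK.
    by apply: (leq_trans _ hkN); rewrite ltn_predL.
  by move=> h3; rewrite addr0; apply/eqP; rewrite eq_le h1 h3.
rewrite eQ; apply: (le_trans _ (lerD (lexx _) (hh t))).
have hs1 : \sum_(i < k) nth 0 (sorted_desc P) i <= \sum_(i < k) (t + hinge t (nth 0 (sorted_desc P) i)).
  by apply: ler_sum => i _; exact: hinge_ge.
apply: (le_trans hs1).
rewrite big_split /= sumr_const card_ord mulr_natl lerD2l.
rewrite -(sum_sd P (hinge t)).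
rewrite (big_ord_widen _ (fun i => hinge t (nth 0 (sorted_desc P) i)) hkN).
rewrite [X in _ <= X](bigID (fun i : 'I_#|T| => (i < k)%N)) /= lerDl.
by apply: sumr_ge0 => i _; apply: hinge_ge0.
Qed.

Lemma GG_id (R : realFieldType) (s : seq R) c :
  GG s (fun u => u) c = c * 2 ^+ size s.
Proof.
elim: s c => [|x s IH] c /=; first by rewrite expr0 mulr1.
by rewrite !IH exprS; ring.
Qed.

Lemma take_enum n k : (k <= n)%N ->
  take k (enum 'I_n) = [seq j : 'I_n <- enum 'I_n | (j < k)%N].
Proof.
move=> hk; apply: (inj_map val_inj).
rewrite map_take val_enum_ord take_iota (minn_idPl hk).
rewrite -(filter_map val (fun i : nat => (i < k)%N)) val_enum_ord.
by have := filter_iota_ltn 0 hk; rewrite add0n => ->.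
Qed.

Lemma prod_take (R : realFieldType) n (a : 'I_n -> R) k : (k <= n)%N ->
  \prod_(x <- take k [seq a i | i <- enum 'I_n]) x = \prod_(j < n | (j < k)%N) a j.
Proof.
move=> hk; rewrite -map_take big_map take_enum // big_filter big_enum_cond.
by apply: eq_bigl => j.
Qed.

Unset Implicit Arguments.

Theorem lemma4 (R : realFieldType) (n : nat) (a b : 'I_n -> R)
  (ha01 : forall j, 0 <= a j <= 1) (hb01 : forall j, 0 <= b j <= 1)
  (ha_mono : forall i j : 'I_n, (i <= j)%N -> a j <= a i)
  (hb_mono : forall i j : 'I_n, (i <= j)%N -> b j <= b i)
  (hprod : forall k : nat, (1 <= k <= n)%N ->
     \prod_(j < n | (j < k)%N) a j <= \prod_(j < n | (j < k)%N) b j)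
  (hprod_eq : \prod_(j < n) a j = \prod_(j < n) b j) :
  majorized (prod_dist a) (prod_dist b).
Proof.
have hc : 0 <= (2 ^+ n : R)^-1 by rewrite invr_ge0 exprn_ge0.
apply: major_of_hinge.
  move=> t; rewrite /prod_dist.
  rewrite (GG_link a (hinge t)) (GG_link b (hinge t)).
  apply: core => //.
  - by rewrite !size_map.
  - rewrite sorted_map; apply: (@sub_sorted _ (fun i j : 'I_n => (i <= j)%N)).
      by move=> i j /= hij; apply: ha_mono.
    by have := iota_sorted 0 n; rewrite -val_enum_ord sorted_map.
  - by apply/allP => x /mapP [i _ ->]; apply: ha01.
  - by apply/allP => x /mapP [i _ ->]; apply: hb01.
  move=> k; case: (leqP k n) => hk.
    rewrite !prod_take //; case: k hk => [|k] hk.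
      by rewrite !big_pred0.
    exact: hprod.
  have sza : forall c : 'I_n -> R, size [seq c i | i <- enum 'I_n] = n.
    by move=> c; rewrite size_map size_enum_ord.
  rewrite !take_oversize ?sza ?(ltnW hk) //.
  have e1 := prod_take a (leqnn n); have e2 := prod_take b (leqnn n).
  rewrite !take_oversize ?sza // in e1 e2.
  rewrite e1 e2 (eq_bigl _ _ (fun j : 'I_n => ltn_ord j)) (eq_bigl _ _ (fun j : 'I_n => ltn_ord j)) hprod_eq.
  exact: lexx.
rewrite /prod_dist.
have e1 := GG_link a (fun u => u) ((2 ^+ n)^-1).
have e2 := GG_link b (fun u => u) ((2 ^+ n)^-1).
by rewrite e1 e2 !GG_id !size_map.
Qed.
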